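(* Let $M\ge1$, $\boldsymbol{y},\boldsymbol{g}\in\mathbb{C}^{4M+1}$ and $\lambda_w>0$. Then $(\hat{\boldsymbol{x}}_1,\hat{\boldsymbol{x}}_2)$ is a minimizer of $$\min_{\boldsymbol{x}_1,\boldsymbol{x}_2}\ \tfrac12\|\boldsymbol{y}-\boldsymbol{x}_1-\boldsymbol{g}\odot\boldsymbol{x}_2\|_2^2+\lambda_w(\|\boldsymbol{x}_1\|_{\mathcal{A}}+\|\boldsymbol{x}_2\|_{\mathcal{A}})$$ if and only if, with $\boldsymbol{r}=\boldsymbol{y}-(\hat{\boldsymbol{x}}_1+\boldsymbol{g}\odot\hat{\boldsymbol{x}}_2)$, $$\|\boldsymbol{r}\|_{\mathcal{A}}^\star\le\lambda_w,\qquad \|\bar{\boldsymbol{g}}\odot\boldsymbol{r}\|_{\mathcal{A}}^\star\le\lambda_w,\qquad \langle\boldsymbol{r},\hat{\boldsymbol{x}}_1+\boldsymbol{g}\odot\hat{\boldsymbol{x}}_2\rangle_{\mathbb{R}}=\lambda_w\|\hat{\boldsymbol{x}}_1\|_{\mathcal{A}}+\lambda_w\|\hat{\boldsymbol{x}}_2\|_{\mathcal{A}}.$$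
   Context: $\boldsymbol{c}(\tau)\in\mathbb{C}^{4M+1}$ has entries $e^{-j2\pi n\tau}$, $n=-2M,\dots,2M$ ($j=\sqrt{-1}$); $\odot$ is entrywise product; $\|\boldsymbol{x}\|_{\mathcal{A}}=\inf\{\sum_k|a_k|:\boldsymbol{x}=\sum_ka_k\boldsymbol{c}(\tau_k),a_k\in\mathbb{C},\tau_k\in[0,1)\}$. Inner products: $\langle\boldsymbol{p},\boldsymbol{x}\rangle=\boldsymbol{x}^H\boldsymbol{p}$ and $\langle\boldsymbol{p},\boldsymbol{x}\rangle_{\mathbb{R}}=\mathrm{Re}(\boldsymbol{x}^H\boldsymbol{p})$. Dual norm: $\|\boldsymbol{p}\|_{\mathcal{A}}^\star=\sup_{\|\boldsymbol{x}\|_{\mathcal{A}}\le1}\langle\boldsymbol{p},\boldsymbol{x}\rangle_{\mathbb{R}}=\sup_{\tau\in[0,1)}|\sum_{n=-2M}^{2M}p_ne^{j2\pi n\tau}|$. *)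

(* Defs.v *)
From HB Require Import structures.
From mathcomp Require Import all_boot all_order all_algebra.
From mathcomp Require Import all_classical all_reals.
From mathcomp Require Import trigo.
From mathcomp Require Import complex.
Set Implicit Arguments. Unset Strict Implicit. Unset Printing Implicit Defensive.
Import Order.TTheory GRing.Theory Num.Theory.
Local Open Scope ring_scope.
Local Open Scope classical_set_scope.

Section Defs.
Variable R : realType.
Variable M : nat.

(* complex vectors of length 4M+1; entry i <-> frequency index n = i - 2M *)
Definition cvec := 'cV[R[i]]_(4 * M + 1).

Definition cabs (z : R[i]) : R := Num.sqrt (complex.Re z ^+ 2 + complex.Im z ^+ 2).

Definition freq (i : 'I_(4 * M + 1)) : int := (i : nat)%:Z - (2 * M)%:Z.

(* atom c(tau): entries e^{-j 2 pi n tau} = cos(2 pi n tau) - j sin(2 pi n tau) *)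
Definition atom (tau : R) : cvec :=
  \col_i (let t := 2 * pi * (freq i)%:~R * tau in complex.Complex (cos t) (- sin t)).

Definition atomic_norm (x : cvec) : R :=
  inf [set s : R | exists (K : nat) (a : 'I_K -> R[i]) (tau : 'I_K -> R),
         (forall k, 0 <= tau k < 1) /\
         x = \sum_(k < K) a k *: atom (tau k) /\
         s = \sum_(k < K) cabs (a k)].

Definition cinner (p x : cvec) : R[i] := \sum_i (conjc (x i 0) * p i 0).

Definition rinner (p x : cvec) : R := complex.Re (cinner p x).

Definition dual_atomic_norm (p : cvec) : R :=
  sup [set s : R | exists x : cvec, atomic_norm x <= 1 /\ s = rinner p x].

Definition hadamard (g x : cvec) : cvec := \col_i (g i 0 * x i 0).
Definition vconj (g : cvec) : cvec := \col_i conjc (g i 0).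

Definition sqnorm2 (v : cvec) : R := \sum_i cabs (v i 0) ^+ 2.

Definition objective (y g : cvec) (lam : R) (x1 x2 : cvec) : R :=
  2^-1 * sqnorm2 (y - x1 - hadamard g x2) + lam * (atomic_norm x1 + atomic_norm x2).

End Defs.

(* Main.v *)
Require Import Defs.
From HB Require Import structures.
From mathcomp Require Import all_boot all_order all_algebra.
From mathcomp Require Import all_classical all_reals.
From mathcomp Require Import trigo.
From mathcomp Require Import complex.
From mathcomp Require Import ring lra.
Import Order.TTheory GRing.Theory Num.Theory.
Local Open Scope ring_scope.
Local Open Scope complex_scope.
Section S.
Variable R : realType.
Local Notation C := R[i].

Lemma cabsC (z : C) : `|z| = (cabs z)%:C.
Proof. by rewrite normc_def. Qed.

Lemma cabs_ge0 (z : C) : 0 <= cabs z.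
Proof. exact: sqrtr_ge0. Qed.

Lemma cabsM (a b : C) : cabs (a * b) = cabs a * cabs b.
Proof. apply: complexI; by rewrite rmorphM /= -!cabsC normrM. Qed.

Lemma cabsD (a b : C) : cabs (a + b) <= cabs a + cabs b.
Proof. by rewrite -lecR rmorphD /= -!cabsC ler_normD. Qed.

Lemma cabs_conj (a : C) : cabs (a^*)%C = cabs a.
Proof. by case: a => a1 a2; rewrite /cabs /= sqrrN. Qed.

Lemma cabs_real (c : R) : cabs c%:C = `|c|.
Proof. by rewrite /cabs /= expr0n /= addr0 sqrtr_sqr. Qed.

Lemma Re_le_cabs (a : C) : complex.Re a <= cabs a.
Proof.
rewrite /cabs; apply: le_trans (ler_norm _) _.
rewrite -sqrtr_sqr ler_wsqrtr // lerDl; exact: sqr_ge0.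
Qed.

Lemma cabs_sqr (a : C) : cabs a ^+ 2 = complex.Re a ^+ 2 + complex.Im a ^+ 2.
Proof. rewrite /cabs sqr_sqrtr //; by rewrite addr_ge0 // sqr_ge0. Qed.

Lemma cabs_eq0 (a : C) : cabs a = 0 -> a = 0.
Proof. move=> h; apply/eqP; rewrite -normr_eq0 cabsC h //. Qed.

Lemma cabs_e (t : R) : cabs (complex.Complex (cos t) (- sin t)) = 1.
Proof. by rewrite /cabs /= sqrrN cos2Dsin2 sqrtr1. Qed.

Lemma Re_conj_mul (a b : C) : complex.Re ((b^*)%C * a) = complex.Re b * complex.Re a + complex.Im b * complex.Im a.
Proof. case: a => a1 a2; case: b => b1 b2 /=. ring. Qed.

Lemma ReD (a b : C) : complex.Re (a + b) = complex.Re a + complex.Re b.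
Proof. by case: a; case: b. Qed.
Lemma ImD (a b : C) : complex.Im (a + b) = complex.Im a + complex.Im b.
Proof. by case: a; case: b. Qed.
Lemma Re_sum (I : Type) (r : seq I) (P : pred I) (F : I -> C) :
  complex.Re (\sum_(i <- r | P i) F i) = \sum_(i <- r | P i) complex.Re (F i).
Proof. by apply: (big_morph _ ReD). Qed.

Lemma ReCM (t : R) (z : C) : complex.Re (t%:C * z) = t * complex.Re z.
Proof. case: z => a b /=. rewrite mul0r subr0 //. Qed.

Lemma ReCM' (t : R) (z : C) : complex.Re ((t -i* 0) * z) = t * complex.Re z.
Proof. case: z => a b /=. rewrite oppr0 mul0r subr0 //. Qed.

Variable M : nat.
Local Notation V := (cvec R M).

Lemma rinnerD (p u v : V) : rinner p (u + v) = rinner p u + rinner p v.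
Proof.
rewrite /rinner /cinner -ReD -big_split /=; congr complex.Re; apply: eq_bigr => i _.
by rewrite mxE rmorphD mulrDl.
Qed.

Lemma rinnerDl (p q v : V) : rinner (p + q) v = rinner p v + rinner q v.
Proof.
rewrite /rinner /cinner -ReD -big_split /=; congr complex.Re; apply: eq_bigr => i _.
by rewrite mxE mulrDr.
Qed.

Lemma rinnerZ (p v : V) (t : R) : rinner p (t%:C *: v) = t * rinner p v.
Proof.
rewrite /rinner /cinner !Re_sum mulr_sumr; apply: eq_bigr => i _.
rewrite mxE rmorphM /= -mulrA.
exact: ReCM'.
Qed.

Lemma rinner0 (p : V) : rinner p 0 = 0.
Proof.
rewrite /rinner /cinner Re_sum big1 // => i _; by rewrite mxE rmorph0 mul0r.
Qed.

Lemma rinner_had (r g x : V) : rinner r (hadamard g x) = rinner (hadamard (vconj g) r) x.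
Proof.
rewrite /rinner /cinner; congr complex.Re; apply: eq_bigr => i _.
by rewrite !mxE rmorphM /= mulrA [_ * (x i 0)^*%C]mulrC.
Qed.

Lemma hadD (g u v : V) : hadamard g (u + v) = hadamard g u + hadamard g v.
Proof. by apply/matrixP => i j; rewrite !mxE mulrDr. Qed.

Lemma hadZ (g u : V) c : hadamard g (c *: u) = c *: hadamard g u.
Proof. by apply/matrixP => i j; rewrite !mxE mulrCA. Qed.

Lemma sqnorm2_ge0 (v : V) : 0 <= sqnorm2 v.
Proof. by rewrite /sqnorm2 sumr_ge0 // => i _; rewrite sqr_ge0. Qed.

Lemma sqnorm2B (r v : V) : sqnorm2 (r - v) = sqnorm2 r - 2 * rinner r v + sqnorm2 v.
Proof.
rewrite /sqnorm2 /rinner /cinner Re_sum mulr_sumr -sumrB -big_split /=.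
apply: eq_bigr => i _; rewrite !mxE !cabs_sqr Re_conj_mul.
case: (r i 0) => a b; case: (v i 0) => c d /=; ring.
Qed.

Lemma rinner_le (p x : V) : rinner p x <= \sum_i cabs (p i 0) * cabs (x i 0).
Proof.
rewrite /rinner /cinner Re_sum; apply: ler_sum => i _.
by apply: le_trans (Re_le_cabs _) _; rewrite cabsM cabs_conj mulrC.
Qed.

Definition ee (t : R) : C := complex.Complex (cos t) (- sin t).

Lemma eeD a b : ee a * ee b = ee (a + b).
Proof.
rewrite /ee; apply/eqP; rewrite eq_complex /= cosD sinD; apply/andP; split; apply/eqP; ring.
Qed.

Lemma ee0 : ee 0 = 1.
Proof. by rewrite /ee cos0 sin0 oppr0. Qed.

Lemma eeX a k : ee a ^+ k = ee (k%:R * a).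
Proof.
elim: k => [|k IH]; first by rewrite expr0 mul0r ee0.
by rewrite exprS IH eeD -addn1 natrD mulrDl mul1r addrC.
Qed.

Local Notation n := (4 * M + 1)%N.

Lemma atomE tau (i : 'I_n) : atom M tau i 0 * ee (2 * pi * tau) ^+ (2 * M) = ee (2 * pi * tau) ^+ i.
Proof.
rewrite mxE !eeX.
change (ee (2 * pi * (freq i)%:~R * tau) * ee ((2 * M)%:R * (2 * pi * tau)) = ee (i%:R * (2 * pi * tau))).
rewrite eeD /freq intrB; congr ee.
have -> : (((2 * M)%N)%:Z)%:~R = (2 * M)%:R :> R by [].
have -> : ((i : nat)%:Z)%:~R = (i : nat)%:R :> R by [].
ring.
Qed.

Definition tk (k : 'I_n) : R := (k : nat)%:R / (2 * n%:R).
Definition wk (k : 'I_n) : C := ee (2 * pi * tk k).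

Lemma tk_range k : 0 <= tk k < 1.
Proof.
have n0 : 0 < (n%:R : R) by rewrite ltr0n addn1.
rewrite /tk divr_ge0 ?ler0n ?mulr_ge0 ?ler0n //= ltr_pdivrMr ?mulr_gt0 // mul1r.
have : ((k : nat)%:R : R) < n%:R by rewrite ltr_nat ltn_ord.
lra.
Qed.

Lemma wk_inj k l : wk k = wk l -> k = l.
Proof.
have n0 : 0 < (n%:R : R) by rewrite ltr0n addn1.
have ang : forall k : 'I_n, 2 * pi * tk k \in `[0, pi].
  move=> k0; rewrite in_itv /=; have [h0 h1] := andP (tk_range k0).
  have kn : ((k0 : nat)%:R : R) < n%:R by rewrite ltr_nat ltn_ord.
  have -> : 2 * pi * tk k0 = pi * ((k0 : nat)%:R / n%:R).
    rewrite /tk; field; apply/negP => /eqP hh.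
    have hM : 0 <= (M%:R : R) by rewrite ler0n.
    lra.
  apply/andP; split; first by rewrite mulr_ge0 ?pi_ge0 ?divr_ge0 ?ler0n.
  by rewrite ler_piMr ?pi_ge0 // ler_pdivrMr // mul1r ltW.
move=> /(congr1 (@complex.Re R)) /= /(cos_inj (ang k) (ang l)) h.
apply/val_inj/eqP; rewrite -(eqr_nat R); apply/eqP.
move: h; rewrite /tk => h.
have hp := pi_gt0 R.
have e1 : forall m : R, 2 * pi * (m / (2 * n%:R)) = m * (pi / n%:R).
  move=> m; field; apply/negP => /eqP hh.
  have hM : 0 <= (M%:R : R) by rewrite ler0n.
  lra.
rewrite !e1 in h; move: h; apply: mulIf.
by rewrite mulf_neq0 ?invr_neq0 ?gt_eqF.
Qed.

Definition Rep (x : V) := [set s : R | exists (K : nat) (a : 'I_K -> R[i]) (tau : 'I_K -> R),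
         (forall k, 0 <= tau k < 1) /\
         x = \sum_(k < K) a k *: atom M (tau k) /\
         s = \sum_(k < K) cabs (a k)]%classic.

Definition Vm : 'M[C]_n := Vandermonde n (\row_k wk k).

Lemma Vm_unit : Vm \in unitmx.
Proof.
rewrite unitmxE unitfE /Vm det_Vandermonde.
apply/prodf_neq0 => i _; apply/prodf_neq0 => j hij; rewrite !mxE subr_eq0.
apply/eqP => /wk_inj hh; by move: hij; rewrite hh ltnn.
Qed.

Lemma span_ex (x : V) : exists s, Rep x s.
Proof.
set b := invmx Vm *m x.
have hx : x = Vm *m b by rewrite /b mulKVmx // Vm_unit.
exists (\sum_(k < n) cabs (b k 0 * wk k ^+ (2 * M))).
exists n, (fun k => b k 0 * wk k ^+ (2 * M)), tk; split; first exact: tk_range.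
split => //.
clearbody b.
apply/matrixP => i j; rewrite (ord1 j) {1}hx mxE summxE; apply: eq_bigr => k _.
rewrite [RHS]mxE /Vm /Vandermonde [in LHS]mxE [in LHS]mxE.
by rewrite -mulrA [_ ^+ (2 * M) * _]mulrC /wk atomE mulrC.
Qed.

Implicit Types x y : V.

Lemma cabs_sum (I : Type) (r : seq I) (F : I -> C) :
  cabs (\sum_(i <- r) F i) <= \sum_(i <- r) cabs (F i).
Proof.
rewrite -lecR -cabsC rmorph_sum /=.
apply: le_trans (ler_norm_sum _ _ _) _.
by rewrite le_eqVlt; apply/orP; left; apply/eqP; apply: eq_bigr => i _; rewrite cabsC.
Qed.

Lemma NE x : atomic_norm x = inf (Rep x). Proof. by []. Qed.

Lemma rep_ne x : exists s, Rep x s.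
Proof. exact: span_ex. Qed.

Lemma rep_ge0 x s : Rep x s -> 0 <= s.
Proof. by case=> K [a [tau [_ [_ ->]]]]; apply: sumr_ge0 => k _; exact: cabs_ge0. Qed.

Lemma N_le x s : Rep x s -> atomic_norm x <= s.
Proof.
move=> h; rewrite NE; apply: ge_inf => //; exists 0 => t /rep_ge0 //.
Qed.

Lemma N_ge x b : (forall s, Rep x s -> b <= s) -> b <= atomic_norm x.
Proof. move=> h; rewrite NE; apply: lb_le_inf => //; exact: rep_ne. Qed.

Lemma N_ge0 x : 0 <= atomic_norm x.
Proof. by apply: N_ge => s /rep_ge0. Qed.

Lemma rep0 : Rep (0 : V) 0.
Proof.
exists 0%N, (fun _ : 'I_0 => 0 : C), (fun _ : 'I_0 => 0 : R); split; first by case.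
by rewrite !big_ord0.
Qed.

Lemma N0 : atomic_norm (0 : V) = 0.
Proof. by apply/eqP; rewrite eq_le N_ge0 N_le //; exact: rep0. Qed.

Lemma repZ x s c : 0 < c -> Rep x s -> Rep (c%:C *: x) (c * s).
Proof.
move=> c0 [K [a [tau [ht [-> ->]]]]].
exists K, (fun k => c%:C * a k), tau; split => //; split.
  by rewrite scaler_sumr; apply: eq_bigr => k _; rewrite scalerA.
rewrite mulr_sumr; apply: eq_bigr => k _; by rewrite cabsM cabs_real gtr0_norm.
Qed.

Lemma NZle x c : 0 < c -> atomic_norm (c%:C *: x) <= c * atomic_norm x.
Proof.
move=> c0; rewrite -ler_pdivrMl //; apply: N_ge => s hs.
rewrite ler_pdivrMl //; apply: N_le; exact: repZ.
Qed.

Lemma NZ x c : 0 < c -> atomic_norm (c%:C *: x) = c * atomic_norm x.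
Proof.
move=> c0; apply/eqP; rewrite eq_le NZle //=.
have ci : 0 < c^-1 by rewrite invr_gt0.
have := @NZle (c%:C *: x) _ ci; rewrite scalerA -rmorphM /= mulVf ?gt_eqF // scale1r.
by rewrite ler_pdivlMl.
Qed.

Lemma repD x y s1 s2 : Rep x s1 -> Rep y s2 -> Rep (x + y) (s1 + s2).
Proof.
move=> [K1 [a1 [t1 [h1 [-> ->]]]]] [K2 [a2 [t2 [h2 [-> ->]]]]].
pose a := fun k : 'I_(K1 + K2) => match fintype.split k with inl k1 => a1 k1 | inr k2 => a2 k2 end.
pose t := fun k : 'I_(K1 + K2) => match fintype.split k with inl k1 => t1 k1 | inr k2 => t2 k2 end.
exists (K1 + K2)%N, a, t; split.
  by move=> k; rewrite /t; case: (fintype.split k).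
have sl k : fintype.split (lshift K2 k) = inl k by exact: (unsplitK (inl _ k)).
have sr k : fintype.split (rshift K1 k) = inr k by exact: (unsplitK (inr _ k)).
rewrite !big_split_ord /a /t; split; congr (_ + _); apply: eq_bigr => k _;
  by rewrite ?sl ?sr.
Qed.

Lemma N_tri x y : atomic_norm (x + y) <= atomic_norm x + atomic_norm y.
Proof.
have H : forall s2, Rep y s2 -> atomic_norm (x + y) - s2 <= atomic_norm x.
  move=> s2 h2; apply: N_ge => s1 h1.
  rewrite lerBlDr; apply: N_le; exact: repD.
suff : atomic_norm (x + y) - atomic_norm x <= atomic_norm y by lra.
apply: N_ge => s2 h2; have := H s2 h2; lra.
Qed.

Lemma N_entry x i : cabs (x i 0) <= atomic_norm x.
Proof.
apply: N_ge => s [K [a [tau [_ [-> ->]]]]].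
rewrite summxE; apply: (le_trans (cabs_sum _ _ _)).
apply: ler_sum => k _; rewrite !mxE cabsM cabs_e mulr1 //.
Qed.

Lemma N_eq0 x : atomic_norm x = 0 -> x = 0.
Proof.
move=> h; apply/matrixP => i j; rewrite (ord1 j) mxE; apply: cabs_eq0.
by apply/eqP; rewrite eq_le cabs_ge0 andbT -h N_entry.
Qed.

Lemma rinner_bound (p x : V) : rinner p x <= (\sum_i cabs (p i 0)) * atomic_norm x.
Proof.
apply: le_trans (rinner_le _ _) _; rewrite mulr_suml; apply: ler_sum => i _.
by rewrite ler_wpM2l ?cabs_ge0 ?N_entry.
Qed.

Lemma dual_ub (p x : V) : rinner p x <= dual_atomic_norm p * atomic_norm x.
Proof.
have [h0|hp] := eqVneq (atomic_norm x) 0.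
  by rewrite (N_eq0 _ h0) rinner0 N0 mulr0.
have hp' : 0 < atomic_norm x by rewrite lt_neqAle eq_sym hp N_ge0.
set c := (atomic_norm x)^-1.
have c0 : 0 < c by rewrite invr_gt0.
have hx1 : atomic_norm (c%:C *: x) = 1 by rewrite NZ // mulVf.
have : rinner p (c%:C *: x) <= dual_atomic_norm p.
  apply: ub_le_sup.
    exists (\sum_i cabs (p i 0)) => s [z [hz ->]].
    apply: le_trans (rinner_bound _ _) _.
    by rewrite ler_piMr // sumr_ge0 // => i _; exact: cabs_ge0.
  by exists (c%:C *: x); rewrite hx1.
by rewrite rinnerZ -ler_pdivlMl // invrK mulrC.
Qed.

Lemma dual_le (p : V) lam : 0 <= lam -> (forall x, rinner p x <= lam * atomic_norm x) ->
  dual_atomic_norm p <= lam.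
Proof.
move=> l0 h; apply: ge_sup.
  by exists (rinner p 0), 0; rewrite N0.
move=> s [z [hz ->]]; apply: le_trans (h z) _; by rewrite ler_piMr.
Qed.

Lemma FO (A Q : R) : 0 <= Q -> (forall t, 0 < t < 1 -> A <= t * Q) -> A <= 0.
Proof.
move=> Q0 h; rewrite leNgt; apply/negP => A0.
set D := 2 * (Q + A + 1).
have D0 : 0 < D by rewrite /D; lra.
set t := A / D.
have htD : t * D = A by rewrite /t mulfVK // gt_eqF.
have t0 : 0 < t by rewrite /t divr_gt0.
have t1 : t < 1.
  have : t * D < D by rewrite htD /D; lra.
  by rewrite gtr_pMl.
have : 0 < t < 1 by rewrite t0 t1.
move/h => hA.
have : 0 < t * (D - Q) by rewrite mulr_gt0 // /D; lra.
rewrite mulrBr htD; lra.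
Qed.

Lemma rinnerN (p v : V) : rinner p (- v) = - rinner p v.
Proof. by apply/eqP; rewrite -addr_eq0 -rinnerD addNr rinner0. Qed.

Lemma sqnorm2Z (t : R) (v : V) : sqnorm2 (t%:C *: v) = t ^+ 2 * sqnorm2 v.
Proof.
rewrite /sqnorm2 mulr_sumr; apply: eq_bigr => i _.
by rewrite mxE cabsM cabs_real exprMn real_normK // num_real.
Qed.

Lemma hadN (g v : V) : hadamard g (- v) = - hadamard g v.
Proof. by apply/matrixP => i j; rewrite !mxE mulrN. Qed.

Section Main.
Variables (y g : V) (lam : R) (x1h x2h : V).
Let uh := x1h + hadamard g x2h.
Let r := y - uh.

Lemma key x1 x2 dd : x1 + hadamard g x2 - uh = dd ->
  objective y g lam x1 x2 =
  2^-1 * (sqnorm2 r - 2 * rinner r dd + sqnorm2 dd) + lam * (atomic_norm x1 + atomic_norm x2).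
Proof.
move=> hd; rewrite /objective -sqnorm2B -hd /r opprB.
congr (_ * sqnorm2 _ + _).
by rewrite addrA subrK opprD addrA.
Qed.

Lemma obj_h : objective y g lam x1h x2h = 2^-1 * sqnorm2 r + lam * (atomic_norm x1h + atomic_norm x2h).
Proof.
have s0 : sqnorm2 (0 : V) = 0.
  rewrite /sqnorm2 big1 // => i _.
  by rewrite mxE /cabs /= expr0n /= addr0 sqrtr0 expr0n.
by rewrite (@key _ _ 0) ?subrr // rinner0 s0 mulr0 subr0 addr0.
Qed.

Lemma main_rep (hlam : 0 < lam) :
  (forall x1 x2 : V, objective y g lam x1h x2h <= objective y g lam x1 x2) <->
  [/\ dual_atomic_norm r <= lam,
       dual_atomic_norm (hadamard (vconj g) r) <= lam &
       rinner r uh = lam * atomic_norm x1h + lam * atomic_norm x2h].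
Proof.
have l0 : 0 <= lam by exact: ltW.
have ub : dual_atomic_norm r <= lam -> dual_atomic_norm (hadamard (vconj g) r) <= lam ->
    rinner r uh <= lam * atomic_norm x1h + lam * atomic_norm x2h.
  move=> h1 h2; rewrite /uh rinnerD rinner_had.
  apply: lerD.
    apply: le_trans (dual_ub _ _) _; by rewrite ler_wpM2r // N_ge0.
  apply: le_trans (dual_ub _ _) _; by rewrite ler_wpM2r // N_ge0.
split.
  move=> H.
  have h1 : dual_atomic_norm r <= lam.
    apply: dual_le => // d; rewrite -subr_le0.
    apply: (@FO _ (2^-1 * sqnorm2 d)); first by rewrite mulr_ge0 ?invr_ge0 ?sqnorm2_ge0.
    move=> t /andP [t0 t1].
    have H' := H (x1h + t%:C *: d) x2h.
    rewrite obj_h (@key _ _ (t%:C *: d)) in H'; last first.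
      by rewrite /uh; apply/matrixP => i j; rewrite !mxE; ring.
    rewrite rinnerZ sqnorm2Z in H'.
    have NT := N_tri x1h (t%:C *: d); rewrite NZ // in NT.
    have := sqnorm2_ge0 d; have := N_ge0 d.
    set Q := sqnorm2 d in H' *; set ND := atomic_norm d in NT *.
    set RR := sqnorm2 r in H'; set rho := rinner r d in H' *.
    move=> hN hQ.
    have hl : lam * atomic_norm (x1h + t%:C *: d) <= lam * (atomic_norm x1h + t * ND).
      by rewrite ler_wpM2l.
    nra.
  have h2 : dual_atomic_norm (hadamard (vconj g) r) <= lam.
    apply: dual_le => // d; rewrite -subr_le0.
    apply: (@FO _ (2^-1 * sqnorm2 (hadamard g d))); first by rewrite mulr_ge0 ?invr_ge0 ?sqnorm2_ge0.
    move=> t /andP [t0 t1].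
    have H' := H x1h (x2h + t%:C *: d).
    rewrite obj_h (@key _ _ (t%:C *: hadamard g d)) in H'; last first.
      by rewrite /uh; apply/matrixP => i j; rewrite !mxE; ring.
    rewrite rinnerZ sqnorm2Z rinner_had in H'.
    have NT := N_tri x2h (t%:C *: d); rewrite NZ // in NT.
    have := sqnorm2_ge0 (hadamard g d); have := N_ge0 d.
    set Q := sqnorm2 (hadamard g d) in H' *; set ND := atomic_norm d in NT *.
    set RR := sqnorm2 r in H'; set rho := rinner _ d in H' *.
    move=> hN hQ.
    have hl : lam * atomic_norm (x2h + t%:C *: d) <= lam * (atomic_norm x2h + t * ND).
      by rewrite ler_wpM2l.
    nra.
  split => //.
  apply/eqP; rewrite eq_le ub //=.
  rewrite -subr_le0.
  apply: (@FO _ (2^-1 * sqnorm2 uh)); first by rewrite mulr_ge0 ?invr_ge0 ?sqnorm2_ge0.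
  move=> t /andP [t0 t1].
  have t1' : 0 < 1 - t by lra.
  have H' := H ((1 - t)%:C *: x1h) ((1 - t)%:C *: x2h).
  rewrite obj_h (@key _ _ ((- t)%:C *: uh)) in H'; last first.
    rewrite /uh; apply/matrixP => i j; rewrite !mxE !rmorphB !rmorphN /= rmorph1; ring.
  rewrite rinnerZ sqnorm2Z !NZ // in H'.
  have := sqnorm2_ge0 uh; have := N_ge0 x1h; have := N_ge0 x2h.
  set Q := sqnorm2 uh in H' *; set N1 := atomic_norm x1h in H' *.
  set N2 := atomic_norm x2h in H' *.
  set RR := sqnorm2 r in H'; set rho := rinner r uh in H' *.
  move=> h2n h1n hQ.
  nra.
case=> h1 h2 h3 x1 x2.
rewrite obj_h (@key x1 x2 (x1 + hadamard g x2 - uh)) // rinnerD rinnerN h3.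
have := sqnorm2_ge0 (x1 + hadamard g x2 - uh).
have : rinner r (x1 + hadamard g x2) <= lam * atomic_norm x1 + lam * atomic_norm x2.
  rewrite rinnerD rinner_had.
  apply: lerD.
    apply: le_trans (dual_ub _ _) _; by rewrite ler_wpM2r // N_ge0.
  apply: le_trans (dual_ub _ _) _; by rewrite ler_wpM2r // N_ge0.
lra.
Qed.
End Main.
End S.

Theorem proposition7 (R : realType) (M : nat) (hM : (1 <= M)%N)
    (y g : cvec R M) (lam : R) (hlam : 0 < lam) (x1h x2h : cvec R M) :
  (forall x1 x2 : cvec R M,
      objective y g lam x1h x2h <= objective y g lam x1 x2) <->
  (let r := y - (x1h + hadamard g x2h) in
   [/\ dual_atomic_norm r <= lam,
       dual_atomic_norm (hadamard (vconj g) r) <= lam &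
       rinner r (x1h + hadamard g x2h) =
         lam * atomic_norm x1h + lam * atomic_norm x2h]).
Proof. exact (@main_rep R M y g lam x1h x2h hlam). Qed.
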